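(* Let $(X,d)$ be a sequentially right $K$-complete quasi-pseudometric space and $\varphi:X\to\mathbb{R}\cup\{\infty\}$ a proper, bounded below, lower semicontinuous function. Let $\varepsilon,\lambda>0$ and let $x_0\in X$ satisfy $\varphi(x_0)\le\varepsilon+\inf\varphi(X)$. Put $\gamma=\varepsilon/\lambda$ and, for $x\in X$, $S_\gamma(x)=\{y\in X:\varphi(y)+\gamma d(y,x)\le\varphi(x)\}$. Then there exists $z\in X$ such that (i) $\varphi(z)+\frac{\varepsilon}{\lambda}d(z,x_0)\le\varphi(x_0)$ (so $\varphi(z)\le\varphi(x_0)$); (ii) $d(z,x_0)\le\lambda$; (iii) $\varphi(y)=\varphi(z)$ for all $y\in S_\gamma(z)$; (iv) $\varphi(z)<\varphi(x)+\frac{\varepsilon}{\lambda}d(x,z)$ for all $x\in X\setminus S_\gamma(z)$.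
   Context: A quasi-pseudometric on $X$ is $d:X\times X\to[0,\infty)$ with $d(x,x)=0$ and $d(x,z)\le d(x,y)+d(y,z)$ (no symmetry). Topology $\tau_d$: neighbourhood base at $x$ given by $\{y:d(x,y)<r\}$, $r>0$; $x_n\to x$ iff $d(x,x_n)\to0$. A sequence $(x_n)$ is right $K$-Cauchy if for every $\varepsilon>0$ there is $n_\varepsilon$ with $d(x_{n+k},x_n)<\varepsilon$ for all $n\ge n_\varepsilon$, $k\in\mathbb{N}$; $X$ is sequentially right $K$-complete if every right $K$-Cauchy sequence converges. $\varphi$ is proper if it is finite somewhere; lower semicontinuous if $\varphi(x)\le\liminf_n\varphi(x_n)$ whenever $x_n\to x$. *)

(* Defs.v *)
From Stdlib Require Import Reals.
From Coquelicot Require Import Coquelicot.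
Open Scope R_scope.

Definition quasi_pseudometric {X : Type} (d : X -> X -> R) : Prop :=
  (forall x y, 0 <= d x y) /\ (forall x, d x x = 0) /\
  (forall x y z, d x z <= d x y + d y z).

Definition qconv {X : Type} (d : X -> X -> R) (u : nat -> X) (x : X) : Prop :=
  is_lim_seq (fun n => d x (u n)) 0.

Definition right_K_Cauchy {X : Type} (d : X -> X -> R) (u : nat -> X) : Prop :=
  forall eps : R, 0 < eps -> exists N : nat,
    forall n k : nat, (N <= n)%nat -> d (u (n + k)%nat) (u n) < eps.

Definition seq_right_K_complete {X : Type} (d : X -> X -> R) : Prop :=
  forall u : nat -> X, right_K_Cauchy d u -> exists x, qconv d u x.

(* phi : X -> R U {+oo}, encoded as Rbar-valued with -oo excluded *)
Definition no_minus_infty {X : Type} (phi : X -> Rbar) : Prop :=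
  forall x, phi x <> m_infty.

Definition proper_fun {X : Type} (phi : X -> Rbar) : Prop :=
  exists x, is_finite (phi x).

Definition bounded_below {X : Type} (phi : X -> Rbar) : Prop :=
  exists m : R, forall x, Rbar_le m (phi x).

(* sequential lsc: phi x <= liminf phi(x_n) whenever x_n -> x, written out:
   every real r < phi x is eventually exceeded by phi(x_n). *)
Definition seq_lsc {X : Type} (d : X -> X -> R) (phi : X -> Rbar) : Prop :=
  forall (u : nat -> X) (x : X), qconv d u x ->
    forall r : R, Rbar_lt r (phi x) ->
      exists N : nat, forall n, (N <= n)%nat -> Rbar_lt r (phi (u n)).

(* inf phi(X) (in R U {+-oo}); the value +oo is irrelevant for the infimum
   once phi is proper, so we take the glb of the finite values *)
Definition inf_fun {X : Type} (phi : X -> Rbar) : Rbar :=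
  Glb_Rbar (fun r : R => exists x, phi x = Finite r).

Definition S_gamma {X : Type} (d : X -> X -> R) (phi : X -> Rbar)
    (gamma : R) (x : X) (y : X) : Prop :=
  Rbar_le (Rbar_plus (phi y) (Finite (gamma * d y x))) (phi x).

(* Main.v *)
Require Import Defs.
From Stdlib Require Import Reals.
From Coquelicot Require Import Coquelicot.
From Stdlib Require Import ClassicalEpsilon Classical Lra Lia.
Open Scope R_scope.

Theorem theorem3p4 (X : Type) (d : X -> X -> R) (phi : X -> Rbar)
  (hd : quasi_pseudometric d) (hcompl : seq_right_K_complete d)
  (hinf : no_minus_infty phi) (hprop : proper_fun phi)
  (hbdd : bounded_below phi) (hlsc : seq_lsc d phi)
  (eps lam : R) (heps : 0 < eps) (hlam : 0 < lam) (x0 : X)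
  (hx0 : Rbar_le (phi x0) (Rbar_plus (Finite eps) (inf_fun phi))) :
  exists z : X,
    Rbar_le (Rbar_plus (phi z) (Finite (eps / lam * d z x0))) (phi x0) /\
    d z x0 <= lam /\
    (forall y, S_gamma d phi (eps / lam) z y -> phi y = phi z) /\
    (forall x, ~ S_gamma d phi (eps / lam) z x ->
       Rbar_lt (phi z) (Rbar_plus (phi x) (Finite (eps / lam * d x z)))).
Proof.
  destruct hd as [hd0 [hdxx hdtri]].
  set (g := eps / lam).
  assert (hg : 0 < g) by (unfold g; apply Rdiv_lt_0_compat; lra).
  set (F := fun x => real (phi x)).
  destruct hbdd as [m hm].
  assert (Sfin : forall x y, is_finite (phi x) ->
    (S_gamma d phi g x y <-> is_finite (phi y) /\ F y + g * d y x <= F x)).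
  { intros x y Hx. unfold S_gamma, F, is_finite in *.
    destruct (phi x) as [a| |]; simpl in Hx; try discriminate.
    generalize (hinf y). destruct (phi y) as [b| |]; simpl; intros Hy.
    - split; [intros H; split; [reflexivity| lra] | intros [_ H]; lra].
    - split; [tauto | intros [H _]; discriminate].
    - congruence. }
  assert (step : forall (n : nat) x, exists y, is_finite (phi x) ->
     S_gamma d phi g x y /\ forall w, S_gamma d phi g x w -> F y <= F w + / INR (S n)).
  { intros n x. destruct (classic (is_finite (phi x))) as [Hx|Hx]; [| exists x; tauto].
    set (E := fun r => exists y, S_gamma d phi g x y /\ r = - F y).
    assert (Hb : bound E).
    { exists (- m). intros r [y [Hy ->]]. apply Sfin in Hy; auto. destruct Hy as [Hy _].
      generalize (hm y). unfold F. rewrite <- Hy. simpl. lra. }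
    assert (Hex : exists r, E r).
    { exists (- F x), x. split; auto. apply Sfin; auto. split; auto. rewrite hdxx. lra. }
    destruct (completeness E Hb Hex) as [l [Hub Hle]].
    assert (hdel : 0 < / INR (S n)) by (apply Rinv_0_lt_compat, lt_0_INR; lia).
    assert (exists y, S_gamma d phi g x y /\ l - / INR (S n) < - F y) as [y [Hy Hly]].
    { apply NNPP; intro H. assert (l <= l - / INR (S n)); [|lra].
      apply Hle. intros r [y [Hy ->]]. apply Rnot_lt_le; intro; apply H; exists y; auto. }
    exists y. intros _. split; auto. intros w Hw.
    assert (E (- F w)) by (exists w; auto). generalize (Hub _ H). lra. }
  set (G := fun n x => constructive_indefinite_description _ (step n x)).
  set (u := fix u n := match n with 0%nat => x0 | S k => proj1_sig (G k (u k)) end).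
  assert (Hu : forall k, u (S k) = proj1_sig (G k (u k))) by reflexivity.
  assert (Hx0fin : is_finite (phi x0)).
  { destruct hprop as [p Hp].
    assert (Hi : Rbar_le (inf_fun phi) (phi p)).
    { unfold inf_fun. destruct (Glb_Rbar_correct (fun r : R => exists x, phi x = Finite r)) as [H1 _].
      rewrite <- Hp. apply H1. exists p. symmetry. exact Hp. }
    generalize (hinf x0). revert hx0 Hi. unfold is_finite in *.
    destruct (inf_fun phi); destruct (phi x0); destruct (phi p); simpl; try tauto; try discriminate. }
  assert (Hspec : forall k, is_finite (phi (u k)) ->
     S_gamma d phi g (u k) (u (S k)) /\
     forall w, S_gamma d phi g (u k) w -> F (u (S k)) <= F w + / INR (S k)).
  { intros k Hk. rewrite Hu. exact (proj2_sig (G k (u k)) Hk). }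
  assert (Hfin : forall k, is_finite (phi (u k))).
  { induction k as [|k IH]; [exact Hx0fin|].
    destruct (Hspec k IH) as [H _]. apply Sfin in H; tauto. }
  assert (Hb : forall n k, F (u (n + k)%nat) + g * d (u (n + k)%nat) (u n) <= F (u n)).
  { intros n k. induction k as [|k IH].
    - rewrite Nat.add_0_r, hdxx. lra.
    - rewrite Nat.add_succ_r. destruct (Hspec (n + k)%nat (Hfin _)) as [H _].
      apply Sfin in H; [|apply Hfin]. destruct H as [_ H].
      assert (g * d (u (S (n + k))) (u n) <= g * d (u (S (n + k))) (u (n+k)%nat) + g * d (u (n+k)%nat) (u n)).
      { rewrite <- Rmult_plus_distr_l. apply Rmult_le_compat_l; [lra|apply hdtri]. }
      lra. }
  assert (Hmem : forall n k, S_gamma d phi g (u n) (u (n + k)%nat)).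
  { intros n k. apply Sfin; auto. }
  assert (Hcau : right_K_Cauchy d u).
  { intros e He. destruct (INR_unbounded (/ (g * e))) as [N HN].
    exists (S N). intros n k Hn. destruct n as [|p]; [lia|].
    destruct (Hspec p (Hfin p)) as [_ Hc].
    specialize (Hc (u (S p + k)%nat)).
    replace (S p + k)%nat with (p + S k)%nat in Hc by lia.
    specialize (Hc (Hmem p (S k))).
    replace (p + S k)%nat with (S p + k)%nat in Hc by lia.
    specialize (Hb (S p) k).
    assert (Hge : 0 < g * e) by (apply Rmult_lt_0_compat; lra).
    assert (Hlt : / INR (S p) < g * e).
    { rewrite <- (Rinv_inv (g * e)). apply Rinv_lt_contravar.
      - apply Rmult_lt_0_compat; [apply Rinv_0_lt_compat; lra| apply lt_0_INR; lia].
      - apply Rlt_le_trans with (INR N); [lra| apply le_INR; lia]. }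
    apply (Rmult_lt_reg_l g); lra. }
  destruct (hcompl u Hcau) as [z Hz].
  assert (Hzl := proj2 (is_lim_seq_spec _ _) Hz). simpl in Hzl.
  assert (Zmem : forall n, S_gamma d phi g (u n) z).
  { intros n. destruct (classic (S_gamma d phi g (u n) z)) as [|Hn]; auto; exfalso.
    set (r := F (u n) - g * d z (u n)).
    assert (exists eta, 0 < eta /\ Rbar_lt (r + eta) (phi z)) as [eta [Heta Hlt]].
    { generalize (hinf z) (Hfin n). unfold S_gamma, is_finite, r, F in *.
      destruct (phi (u n)) as [a| |]; simpl; try discriminate; intros.
      destruct (phi z) as [b| |]; simpl in *.
      - exists ((b - (a - g * d z (u n))) / 2). split; lra.
      - exists 1; split; [lra| exact I].
      - congruence. }
    destruct (hlsc u z Hz _ Hlt) as [N1 HN1].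
    assert (Heg : 0 < eta / g) by (apply Rdiv_lt_0_compat; lra).
    destruct (Hzl (mkposreal _ Heg)) as [N2 HN2].
    set (M := (Init.Nat.max N1 N2 + n)%nat).
    specialize (HN1 M ltac:(unfold M; lia)). specialize (HN2 M ltac:(unfold M; lia)).
    simpl in HN2. rewrite Rminus_0_r, Rabs_pos_eq in HN2 by apply hd0.
    replace M with (n + Init.Nat.max N1 N2)%nat in * by (unfold M; lia).
    specialize (Hb n (Init.Nat.max N1 N2)).
    set (k := Init.Nat.max N1 N2) in *.
    generalize (Hfin (n + k)%nat). unfold is_finite. intros Hf.
    rewrite <- Hf in HN1. simpl in HN1. fold (F (u (n + k)%nat)) in HN1.
    assert (g * d z (u n) <= g * d z (u (n + k)%nat) + g * d (u (n + k)%nat) (u n)).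
    { rewrite <- Rmult_plus_distr_l. apply Rmult_le_compat_l; [lra|apply hdtri]. }
    assert (g * d z (u (n + k)%nat) < eta).
    { apply Rlt_le_trans with (g * (eta / g)); [apply Rmult_lt_compat_l; lra| right; field; lra]. }
    unfold r in HN1. lra. }
  assert (Hzfin : is_finite (phi z)).
  { generalize (Zmem 0%nat). intro H. apply Sfin in H; [tauto| apply Hfin]. }
  assert (Zr : forall n, F z + g * d z (u n) <= F (u n)).
  { intros n. generalize (Zmem n). intro H. apply Sfin in H; [tauto| apply Hfin]. }
  exists z. split; [exact (Zmem 0%nat)|]. split.
  { assert (Hi : Rbar_le (inf_fun phi) (phi z)).
    { unfold inf_fun. destruct (Glb_Rbar_correct (fun r : R => exists x, phi x = Finite r)) as [H1 _].
      rewrite <- Hzfin. apply H1. exists z. symmetry. exact Hzfin. }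
    generalize (Zr 0%nat). simpl. unfold F. intros H.
    assert (g * d z x0 <= eps).
    { revert hx0 Hi H. generalize (hinf x0). unfold is_finite in *.
      rewrite <- Hzfin, <- Hx0fin.
      destruct (inf_fun phi); simpl; intros; try tauto; try lra. }
    apply Rnot_lt_le; intro Hc.
    assert (g * lam < g * d z x0) by (apply Rmult_lt_compat_l; lra).
    unfold g in *. replace (eps / lam * lam) with eps in * by (field; lra). lra. }
  split.
  { intros y Hy. apply Sfin in Hy; auto. destruct Hy as [Hyfin Hy].
    assert (Hall : forall n, F z <= F y + / INR (S n)).
    { intros n.
      assert (Hyn : S_gamma d phi g (u n) y).
      { apply Sfin; [apply Hfin|]. split; auto. specialize (Zr n).
        assert (g * d y (u n) <= g * d y z + g * d z (u n)).
        { rewrite <- Rmult_plus_distr_l. apply Rmult_le_compat_l; [lra|apply hdtri]. }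
        lra. }
      destruct (Hspec n (Hfin n)) as [_ Hc]. specialize (Hc y Hyn).
      specialize (Zr (S n)). assert (0 <= g * d z (u (S n))) by (apply Rmult_le_pos; [lra| apply hd0]).
      lra. }
    assert (F z <= F y).
    { apply Rnot_lt_le; intro Hc.
      destruct (INR_unbounded (/ (F z - F y))) as [N HN].
      specialize (Hall N).
      assert (/ INR (S N) < F z - F y).
      { rewrite <- (Rinv_inv (F z - F y)). apply Rinv_lt_contravar.
        - apply Rmult_lt_0_compat; [apply Rinv_0_lt_compat; lra| apply lt_0_INR; lia].
        - apply Rlt_le_trans with (INR N); [lra| apply le_INR; lia]. }
      lra. }
    assert (0 <= g * d y z) by (apply Rmult_le_pos; [lra| apply hd0]).
    unfold is_finite in *. rewrite <- Hyfin, <- Hzfin. f_equal. unfold F in *. lra. }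
  intros x Hx. apply Rbar_not_le_lt. exact Hx.
Qed.
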